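(* Let $m,n,d,n_0$ be positive integers, $R>0$, $\mathbb{S}^d:=[-R,R]^d$, $x\in\mathbb{R}^{m\times n}$, and let $G:\mathbb{R}^d\to\mathbb{R}^{m\times n}$ be continuous. Assume there exists $z^*\in\mathbb{S}^d$ with $\|x-G(z^* )\|_0\le n_0$. Consider the constrained problem $$(\mathrm{P}_0):\quad \min_{z\in\mathbb{S}^d,\ M\in\mathbb{R}^{m\times n}} \|(\mathbf{1}-M)\odot x-(\mathbf{1}-M)\odot G(z)\|_2^2 \quad\text{s.t. } \|M\|_0\le n_0,$$ and, for $\lambda>0$, the penalized problem $$(\mathrm{P}_\lambda):\quad \min_{z\in\mathbb{S}^d,\ M\in\mathbb{R}^{m\times n}} \|(\mathbf{1}-M)\odot x-(\mathbf{1}-M)\odot G(z)\|_2^2+\lambda\|M\|_1 .$$ Let $\hat z(\lambda)$ be any optimal $z$-component of a solution of $(\mathrm{P}_\lambda)$, and let $\mathcal{Z}^*$ be the set of $z$-components of optimal solutions of $(\mathrm{P}_0)$. Then $d_\infty(\hat z(\lambda),\mathcal{Z}^* )\downarrow 0$ as $\lambda\downarrow 0$. Moreover, letting $\tilde n=\min_{z\in\mathbb{S}^d}\|x-G(z)\|_0$ and $\tilde{\mathcal{Z}}=\{z\in\mathbb{S}^d : \|x-G(z)\|_0=\tilde n\}$, we have $d_\infty(\hat z(\lambda),\tilde{\mathcal{Z}})\downarrow 0$ as $\lambda\downarrow 0$. If in addition $\tilde{\mathcal{Z}}=\{z^*\}$ (i.e. $z^*$ is the unique minimizer of $\|x-G(z)\|_0$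 over $\mathbb{S}^d$), then $\hat z(\lambda)\to z^*$ as $\lambda\downarrow 0$.
   Context: For a matrix $T$, $\|T\|_0$ is the number of nonzero entries, and $\|T\|_1,\|T\|_2,\|T\|_\infty$ are computed by treating $T$ as a vector. $\mathbf{1}$ is the all-ones $m\times n$ matrix and $\odot$ is the entrywise (Hadamard) product. For a point $a$ and a set $B$, $d_\infty(a,B):=\inf_{b\in B}\|a-b\|_\infty$. *)

(* Defs.v *)
From HB Require Import structures.
From mathcomp Require Import all_boot all_order all_algebra.
From mathcomp Require Import all_classical all_reals all_analysis.
Set Implicit Arguments. Unset Strict Implicit. Unset Printing Implicit Defensive.
Import Order.TTheory GRing.Theory Num.Theory.
Import numFieldNormedType.Exports.
Local Open Scope classical_set_scope.
Local Open Scope ring_scope.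

Section Defs.
Variable R : realType.

Definition l0norm (m n : nat) (T : 'M[R]_(m, n)) : nat :=
  #|[set ij : 'I_m * 'I_n | T ij.1 ij.2 != 0]|.

Definition l1norm (m n : nat) (T : 'M[R]_(m, n)) : R :=
  \sum_(i < m) \sum_(j < n) `|T i j|.

Definition l2norm_sq (m n : nat) (T : 'M[R]_(m, n)) : R :=
  \sum_(i < m) \sum_(j < n) (T i j) ^+ 2.

Definition linfnorm (d : nat) (v : 'rV[R]_d) : R :=
  \big[Num.max/0]_(i < d) `|v 0 i|.

Definition hadamard (m n : nat) (A B : 'M[R]_(m, n)) : 'M[R]_(m, n) :=
  \matrix_(i, j) (A i j * B i j).

Definition ones (m n : nat) : 'M[R]_(m, n) := const_mx 1.

Definition dinf (d : nat) (a : 'rV[R]_d) (B : set 'rV[R]_d) : R :=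
  inf [set linfnorm (a - b) | b in B].

Definition box (d : nat) (r : R) : set 'rV[R]_d :=
  [set z | forall i : 'I_d, - r <= z 0 i <= r].

Definition fid (m n d : nat) (x : 'M[R]_(m, n)) (G : 'rV[R]_d -> 'M[R]_(m, n))
    (z : 'rV[R]_d) (M : 'M[R]_(m, n)) : R :=
  l2norm_sq (hadamard (ones m n - M) x - hadamard (ones m n - M) (G z)).

Definition opt_Plam (m n d : nat) (r : R) (x : 'M[R]_(m, n))
    (G : 'rV[R]_d -> 'M[R]_(m, n)) (lam : R) (z : 'rV[R]_d) (M : 'M[R]_(m, n)) : Prop :=
  @box d r z /\
  forall z' M', @box d r z' ->
    fid x G z M + lam * l1norm M <= fid x G z' M' + lam * l1norm M'.

Definition opt_P0 (m n d : nat) (r : R) (x : 'M[R]_(m, n))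
    (G : 'rV[R]_d -> 'M[R]_(m, n)) (n0 : nat) (z : 'rV[R]_d) (M : 'M[R]_(m, n)) : Prop :=
  @box d r z /\ (l0norm M <= n0)%N /\
  forall z' M', @box d r z' -> (l0norm M' <= n0)%N -> fid x G z M <= fid x G z' M'.

Definition Zstar (m n d : nat) (r : R) (x : 'M[R]_(m, n))
    (G : 'rV[R]_d -> 'M[R]_(m, n)) (n0 : nat) : set 'rV[R]_d :=
  [set z | exists M, opt_P0 r x G n0 z M].

Definition Ztilde (m n d : nat) (r : R) (x : 'M[R]_(m, n))
    (G : 'rV[R]_d -> 'M[R]_(m, n)) : set 'rV[R]_d :=
  [set z | @box d r z /\ forall z', @box d r z' -> (l0norm (x - G z) <= l0norm (x - G z'))%N].

End Defs.

(* Main.v *)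
Require Import Defs.
From HB Require Import structures.
From mathcomp Require Import all_boot all_order all_algebra.
From mathcomp Require Import all_classical all_reals all_analysis.
From mathcomp Require Import ring lra.
Import Order.TTheory GRing.Theory Num.Theory.
Import numFieldNormedType.Exports.
Local Open Scope classical_set_scope.
Local Open Scope ring_scope.

Lemma linfnormE (R : realType) d (v : 'rV[R]_d) : linfnorm v = `|v|.
Proof.
apply/le_anti/andP; split.
  rewrite /linfnorm; apply: bigmax_le => // i _.
  rewrite [leRHS]/Num.Def.normr /= mx_normrE.
  by apply: (le_trans _ (le_bigmax _ _ (0, i))).
rewrite [leLHS]/Num.Def.normr /= mx_normrE; apply: bigmax_le.
  by rewrite /linfnorm; apply: bigmax_ge_id.
move=> [i j] _ /=; rewrite (ord1 i) /linfnorm.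
exact: (le_bigmax _ _ j).
Qed.

Lemma mx_entry_le (R : realType) m n (A : 'M[R]_(m, n)) i j : `|A i j| <= `|A|.
Proof.
rewrite [leRHS]/Num.Def.normr /= mx_normrE.
exact: (le_bigmax _ _ (i, j)).
Qed.

Lemma term_lb (R : realType) (dl e mu lam : R) : 0 < dl -> dl ^+ 2 <= e ^+ 2 -> 0 <= lam ->
  4 * dl ^+ 2 * lam - lam ^+ 2 <= 4 * dl ^+ 2 * (((1 - mu) * e) ^+ 2 + lam * `|mu|).
Proof.
move=> dl0 de lam0.
have hmu : mu <= `|mu| by apply: ler_norm.
have h1 : 0 <= ((1 - mu) * e) ^+ 2 by apply: sqr_ge0.
have [mu1|mu1] := leP 1 mu.
  have : 1 <= `|mu| by apply: le_trans hmu.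
  move=> h2.
  have h5 : lam <= lam * `|mu| by rewrite -{1}(mulr1 lam); apply: ler_wpM2l.
  have h6 : 0 < 4 * dl ^+ 2 by rewrite mulr_gt0 // exprn_gt0.
  have h7 : 4 * dl ^+ 2 * lam <= 4 * dl ^+ 2 * (((1 - mu) * e) ^+ 2 + lam * `|mu|).
    by apply: ler_wpM2l; [exact: ltW| lra].
  have : 0 <= lam ^+ 2 by apply: sqr_ge0.
  lra.
set t := 1 - mu.
have t0 : 0 < t by rewrite /t subr_gt0.
have h3 : t ^+ 2 * dl ^+ 2 <= t ^+ 2 * e ^+ 2 by apply: ler_wpM2l => //; apply: sqr_ge0.
have h4 : 0 <= (2 * dl ^+ 2 * t - lam) ^+ 2 by apply: sqr_ge0.
have -> : ((1 - mu) * e) ^+ 2 = t ^+ 2 * e ^+ 2 by rewrite /t; ring.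
have h5 : lam * (1 - t) <= lam * `|mu| by rewrite /t opprB addrC subrK; apply: ler_wpM2l.
have h6 : 0 < 4 * dl ^+ 2 by rewrite mulr_gt0 // exprn_gt0.
have h7 : 4 * dl ^+ 2 * (t ^+ 2 * dl ^+ 2 + lam * (1 - t)) <= 4 * dl ^+ 2 * (t ^+ 2 * e ^+ 2 + lam * `|mu|).
  by apply: ler_wpM2l; [exact: ltW| lra].
apply: le_trans h7.
have -> : 4 * dl ^+ 2 * (t ^+ 2 * dl ^+ 2 + lam * (1 - t)) = 4 * dl ^+ 2 * lam - lam ^+ 2 + (2 * dl ^+ 2 * t - lam) ^+ 2 by ring.
lra.
Qed.

Lemma Fsum (R : realType) m n d (x : 'M[R]_(m, n)) (G : 'rV[R]_d -> 'M[R]_(m, n)) z M lam :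
  fid x G z M + lam * l1norm M = \sum_(p : 'I_m * 'I_n)
    (((1 - M p.1 p.2) * (x p.1 p.2 - G z p.1 p.2)) ^+ 2 + lam * `|M p.1 p.2|).
Proof.
rewrite /fid /l2norm_sq /l1norm mulr_sumr -big_split /=.
rewrite (eq_bigr (fun i => \sum_(j < n) (((1 - M i j) * (x i j - G z i j)) ^+ 2 + lam * `|M i j|))).
  by rewrite pair_big.
move=> i _; rewrite mulr_sumr -big_split /=; apply: eq_bigr => j _.
by rewrite !mxE; congr (_ ^+ 2 + _); ring.
Qed.

Lemma Flb (R : realType) m n d (x : 'M[R]_(m, n)) (G : 'rV[R]_d -> 'M[R]_(m, n)) z M lam
  (dl : R) (S : {set 'I_m * 'I_n}) : 0 < dl -> 0 <= lam ->
  (forall p, p \in S -> dl ^+ 2 <= (x p.1 p.2 - G z p.1 p.2) ^+ 2) ->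
  #|S|%:R * (4 * dl ^+ 2 * lam - lam ^+ 2) <= 4 * dl ^+ 2 * (fid x G z M + lam * l1norm M).
Proof.
move=> dl0 lam0 HS; rewrite Fsum mulr_sumr.
rewrite mulrC mulr_natr -sumr_const.
apply: le_trans (_ : \sum_(p | p \in S) 4 * dl ^+ 2 *
   (((1 - M p.1 p.2) * (x p.1 p.2 - G z p.1 p.2)) ^+ 2 + lam * `|M p.1 p.2|) <= _).
  by apply: ler_sum => p pS; apply: term_lb => //; apply: HS.
rewrite [leRHS](bigID (fun p => p \in S)) /= lerDl.
apply: sumr_ge0 => p _; apply: mulr_ge0; first by rewrite mulr_ge0 // sqr_ge0.
by apply: addr_ge0; [apply: sqr_ge0 | apply: mulr_ge0].
Qed.

Definition Mind (R : realType) m n (A : 'M[R]_(m, n)) : 'M[R]_(m, n) :=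
  \matrix_(i, j) (if A i j != 0 then 1 else 0).

Arguments Mind {R m n}.

Lemma Fub (R : realType) m n d (x : 'M[R]_(m, n)) (G : 'rV[R]_d -> 'M[R]_(m, n)) z lam :
  fid x G z (Mind (x - G z)) + lam * l1norm (Mind (x - G z)) = lam * (l0norm (x - G z))%:R.
Proof.
rewrite Fsum /l0norm mulr_natr -sumr_const [RHS]big_mkcond /=.
apply: eq_bigr => -[i j] _ /=; rewrite !mxE /in_set unfold_in /= asboolb !mxE.
case: ifP => [_|/negbFE/eqP ->]; last by rewrite subr0 mul1r normr0 mulr0 addr0 expr2 mulr0.
by rewrite subrr mul0r normr1 mulr1 expr2 mulr0 add0r.
Qed.

Lemma l0norm_Mind (R : realType) m n (A : 'M[R]_(m, n)) : l0norm (Mind A) = l0norm A.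
Proof.
rewrite /l0norm; apply: eq_card => -[i j]; rewrite /in_set !unfold_in /= !asboolb mxE.
by case: ifP => _; rewrite ?oner_neq0 ?eqxx.
Qed.

Lemma box_compact (R : realType) d (r : R) : compact (@box R d r).
Proof.
have -> : @box R d r = [set v : 'rV[R]_d | forall i, `[- r, r]%classic (v ord0 i)].
  apply/funext => v; apply/propext; rewrite /box /=.
  have -> : (0 : 'I_1) = ord0 by apply/val_inj.
  by split=> H i; have := H i; rewrite /= in_itv.
apply: (@rV_compact _ _ (fun=> `[- r, r]%classic)) => i; exact: segment_compact.
Qed.

Lemma near_pick (R : realType) (D : set R) (l0 : R) : 0 < l0 ->
  \forall t \near (0:R)^'+, D t -> [/\ 0 < t, t < l0 & D t].
Proof.
move=> l00.
near=> t => Dt; split.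
- by near: t; exact: nbhs_right_gt.
- by near: t; exact: nbhs_right_lt.
- exact: Dt.
Unshelve. all: by end_near.
Qed.

Lemma cluster_pick (R : realType) d (zhat : R -> 'rV[R]_d) (D : set R) zb
  (F := within D (0^'+ : set_system R)) :
  cluster (zhat @ F) zb -> forall l0 : R, 0 < l0 -> forall B, nbhs zb B ->
  exists lam, [/\ 0 < lam, lam < l0, D lam & B (zhat lam)].
Proof.
move=> clz l0 l00 B nB.
have FA : (zhat @ F) (zhat @` [set lam | [/\ 0 < lam, lam < l0 & D lam]]).
  have H := @near_pick R D l0 l00.
  apply: filterS H => t Ht Dt; exists t => //; exact: Ht.
have [z [[lam [h1 h2 h3] <-] Bz]] := clz _ _ FA nB.
by exists lam.
Qed.

Lemma l0normE (R : realType) m n (A : 'M[R]_(m, n)) :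
  l0norm A = #|finset (fun p : 'I_m * 'I_n => A p.1 p.2 != 0)|.
Proof.
rewrite /l0norm; apply: eq_card => -[i j].
by rewrite finset.inE /in_set unfold_in /= asboolb.
Qed.

Lemma key (R : realType) m n d (r : R) (x : 'M[R]_(m, n))
    (G : 'rV[R]_d -> 'M[R]_(m, n)) (zhat : R -> 'rV[R]_d) :
  continuous G ->
  (forall lam, 0 < lam -> exists M, opt_Plam r x G lam (zhat lam) M) ->
  forall eps, 0 < eps -> \forall lam \near (0:R)^'+,
    exists2 b, Ztilde r x G b & linfnorm (zhat lam - b) < eps.
Proof.
move=> cG opt eps eps0.
set Q := fun lam => exists2 b, Ztilde r x G b & linfnorm (zhat lam - b) < eps.
apply: contrapT => nQ.
pose D := fun lam => ~ Q lam.
pose F := within D ((0:R)^'+ : set_system R).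
have FF : Filter F by apply: within_filter.
have PF : ProperFilter F.
  apply: (Build_ProperFilter _ FF) => F0; apply: nQ.
  have F0' : \forall t \near (0:R)^'+, D t -> False := F0.
  apply: filterS F0' => t H; apply: contrapT => nt; exact: (H nt).
have Fb : (zhat @ F) (@box R d r).
  apply: filterS (@near_pick R D 1 ltr01) => t Ht Dt.
  have [t0 _ _] := Ht Dt.
  by have [M [bz _]] := opt t t0.
have [zb [Bzb clz]] := @box_compact R d r _ (fmap_proper_filter zhat PF) Fb.
have pick := @cluster_pick R d zhat D zb clz.
have Zzb : Ztilde r x G zb.
  split => // z' bz'.
  rewrite leqNgt; apply/negP => ltks.
  set S := finset (fun p : 'I_m * 'I_n => (x - G zb) p.1 p.2 != 0).
  have sE : #|S| = l0norm (x - G zb) by rewrite l0normE.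
  pose dl := \big[Num.min/1]_(p in S) `|x p.1 p.2 - G zb p.1 p.2|.
  have dl0 : 0 < dl.
    apply: lt_bigmin => // p; rewrite finset.inE !mxE => h.
    by rewrite normr_gt0.
  have dlle : forall p, p \in S -> dl <= `|x p.1 p.2 - G zb p.1 p.2|.
    by move=> p pS; apply: bigmin_le_cond.
  have dl20 : 0 < dl / 2 by rewrite divr_gt0.
  have nG : \forall t \near zb, `|G zb - G t| < dl / 2.
    by move: (cG zb) => /cvgrPdist_lt; apply.
  have S0 : (0 < #|S|)%N by rewrite sE; apply: leq_ltn_trans ltks.
  have sR0 : 0 < (#|S|%:R : R) by rewrite ltr0n.
  have a0 : 0 < (dl / 2) ^+ 2 / #|S|%:R by rewrite divr_gt0 // exprn_gt0.
  have [lam [lam0 laml Dl Bl]] := pick _ a0 _ nG.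
  have [M [bM optM]] := opt lam lam0.
  have ub := optM z' (Mind (x - G z')) bz'; rewrite Fub in ub.
  have lb := @Flb R m n d x G (zhat lam) M lam (dl / 2) S dl20 (ltW lam0).
  have hS : forall p, p \in S -> (dl / 2) ^+ 2 <= (x p.1 p.2 - G (zhat lam) p.1 p.2) ^+ 2.
    move=> p pS.
    have h1 := dlle p pS.
    have h2 : `|G zb p.1 p.2 - G (zhat lam) p.1 p.2| < dl / 2.
      apply: le_lt_trans Bl.
      by have := @mx_entry_le R m n (G zb - G (zhat lam)) p.1 p.2; rewrite !mxE.
    have h4 : `|x p.1 p.2 - G zb p.1 p.2| <=
        `|x p.1 p.2 - G (zhat lam) p.1 p.2| + `|G zb p.1 p.2 - G (zhat lam) p.1 p.2|.
      rewrite (_ : x p.1 p.2 - G zb p.1 p.2 = (x p.1 p.2 - G (zhat lam) p.1 p.2)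
          - (G zb p.1 p.2 - G (zhat lam) p.1 p.2)); last by ring.
      exact: ler_normB.
    have h3 : dl / 2 <= `|x p.1 p.2 - G (zhat lam) p.1 p.2| by lra.
    rewrite -(real_normK (num_real (x p.1 p.2 - G (zhat lam) p.1 p.2))).
    have h5 : 0 <= dl / 2 by exact: ltW.
    nra.
  have {}lb := lb hS.
  set a := (dl / 2) ^+ 2 in lb laml a0 hS.
  set sR := (#|S|%:R : R) in lb laml sR0 a0.
  set k := ((l0norm (x - G z'))%:R : R) in ub.
  set FF0 := fid x G (zhat lam) M + lam * l1norm M in lb ub.
  have hk : k + 1 <= sR by rewrite /k /sR natr1 ler_nat sE.
  have k0 : 0 <= k by rewrite /k ler0n.
  have apos : 0 < a by rewrite /a exprn_gt0.
  have e1 : 4 * a * FF0 <= 4 * a * (lam * k) by apply: ler_wpM2l => //; lra.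
  have e2 : lam * sR < a by rewrite -ltr_pdivlMr.
  have e3 : lam * sR * lam < a * lam by rewrite ltr_pM2r.
  have e4 : 4 * a * lam * (k + 1) <= 4 * a * lam * sR.
    apply: ler_wpM2l => //; apply: mulr_ge0; [lra | exact: ltW].
  have e5 : 0 < a * lam by apply: mulr_gt0.
  nra.
have nB : nbhs zb [set z | `|zb - z| < eps].
  exact: ((cvgrPdist_lt (fun z => z) zb).1 (@cvg_id _ (nbhs zb)) eps eps0).
have [lam [l0 _ Dl Bl]] := pick 1 ltr01 _ nB.
apply: Dl; exists zb => //.
by rewrite linfnormE distrC.
Qed.

Lemma dinf_bound (R : realType) d (a b : 'rV[R]_d) (B : set 'rV[R]_d) : B b ->
  0 <= dinf a B /\ dinf a B <= linfnorm (a - b).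
Proof.
move=> Bb; split.
  apply: lb_le_inf; first by exists (linfnorm (a - b)), b.
  by move=> _ [c _ <-]; rewrite linfnormE.
apply: ge_inf; last by exists b.
by exists 0 => _ [c _ <-]; rewrite linfnormE.
Qed.

Lemma fid_ge0 (R : realType) m n d (x : 'M[R]_(m, n)) (G : 'rV[R]_d -> 'M[R]_(m, n)) z M :
  0 <= fid x G z M.
Proof.
by rewrite /fid /l2norm_sq; apply: sumr_ge0 => i _; apply: sumr_ge0 => j _; apply: sqr_ge0.
Qed.

Lemma Zsub (R : realType) m n d n0 (r : R) (x : 'M[R]_(m, n))
    (G : 'rV[R]_d -> 'M[R]_(m, n)) zstar :
  @box R d r zstar -> (l0norm (x - G zstar) <= n0)%N ->
  Ztilde r x G `<=` Zstar r x G n0.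
Proof.
move=> bs hs z [bz minz]; exists (Mind (x - G z)); split => //; split.
  by rewrite l0norm_Mind; apply: leq_trans (minz _ bs) hs.
move=> z' M' _ _.
have := @Fub R m n d x G z 0; rewrite !mul0r addr0 => ->.
exact: fid_ge0.
Qed.

Theorem theorem1 (R : realType) (m n d n0 : nat) (r : R)
    (x : 'M[R]_(m, n)) (G : 'rV[R]_d -> 'M[R]_(m, n)) (zstar : 'rV[R]_d)
    (zhat : R -> 'rV[R]_d) :
  (0 < m)%N -> (0 < n)%N -> (0 < d)%N -> (0 < n0)%N -> 0 < r ->
  continuous G ->
  @box R d r zstar -> (l0norm (x - G zstar) <= n0)%N ->
  (forall lam, 0 < lam -> exists M, opt_Plam r x G lam (zhat lam) M) ->
  [/\ dinf (zhat lam) (Zstar r x G n0) @[lam --> 0^'+] --> 0,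
      dinf (zhat lam) (Ztilde r x G) @[lam --> 0^'+] --> 0
    & Ztilde r x G = [set zstar] -> zhat lam @[lam --> 0^'+] --> zstar].
Proof.
move=> _ _ _ _ _ cG bs hs opt.
have K := @key R m n d r x G zhat cG opt.
have gen : forall B, Ztilde r x G `<=` B ->
    dinf (zhat lam) B @[lam --> 0^'+] --> 0.
  move=> B sB; apply/cvgrPdist_lt => e e0.
  apply: filterS (K e e0) => lam [b Zb lb].
  have [h1 h2] := @dinf_bound R d (zhat lam) b B (sB _ Zb).
  rewrite sub0r normrN ger0_norm //; exact: le_lt_trans h2 lb.
split.
- exact: gen (@Zsub R m n d n0 r x G zstar bs hs).
- exact: gen.
- move=> Zeq; apply/cvgrPdist_lt => e e0.
  apply: filterS (K e e0) => lam [b Zb lb].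
  rewrite Zeq in Zb; rewrite -Zb.
  by rewrite distrC -linfnormE.
Qed.
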